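(* Let $0<\alpha<\pi$, $\varepsilon=e^{i\alpha}$ and $0<c<2$. Then there exists a sequence $(x_n)_{n\ge0}$ of complex numbers with $x_n=e^{i\beta_n}$, $0<\beta_n<\alpha$ for all $n\ge0$, satisfying for every $n\ge0$ $$(n+1)(x_n^2-1)\frac{x_{n+1}+x_n/\varepsilon}{\varepsilon+x_nx_{n+1}}-n\left(1-\frac{x_n^2}{\varepsilon^2}\right)\frac{x_{n-1}+\varepsilon x_n}{\varepsilon+x_{n-1}x_n}=c\,x_n\frac{\varepsilon^2-1}{2\varepsilon^2}$$ (for $n=0$ the second term on the left is omitted).
   Context: This is a discrete Painlevé-type equation; the denominators $\varepsilon+x_nx_{n+1}$ are nonzero along the solution. *)

(* Defs.v *)
From Stdlib Require Import Reals.
From Coquelicot Require Import Coquelicot.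
Open Scope R_scope.

Definition cis (b : R) : C := (cos b, sin b).

Definition term1 (eps : C) (n : nat) (xn xn1 : C) : C :=
  (RtoC (INR (S n)) * (xn * xn - 1) * ((xn1 + xn / eps) / (eps + xn * xn1)))%C.

Definition term2 (eps : C) (n : nat) (xnm1 xn : C) : C :=
  (RtoC (INR n) * (1 - xn * xn / (eps * eps)) * ((xnm1 + eps * xn) / (eps + xnm1 * xn)))%C.

Definition rhs (eps : C) (c : R) (xn : C) : C :=
  (RtoC c * xn * ((eps * eps - 1) / (2 * (eps * eps))))%C.

(* Main.v *)
Require Import Defs.
From Stdlib Require Import Reals Lra Lia Psatz Classical ClassicalEpsilon.
From Coquelicot Require Import Coquelicot.
Open Scope R_scope.


Definition sn (u:R) := 2*u/(1+u*u).
Definition sf ta u := (ta - u)/(1+ta*u).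
Definition rr ta u v := (1 - sf ta u * v)/(1 + sf ta u * v).
Definition mob (t:R) : C := ((1-t*t)/(1+t*t), 2*t/(1+t*t)).

Lemma sq_pos t : 0 < 1 + t*t. Proof. nra. Qed.

Lemma Cdiv_eq (a b d : C) : b <> 0%C -> a = (d*b)%C -> (a/b = d)%C.
Proof. intros Hb ->. field. exact Hb. Qed.

Ltac ceq := apply injective_projections; simpl.

Lemma mob_ne0 ta : mob ta <> 0%C.
Proof.
  { intro H. assert (H1 := f_equal fst H). assert (H2 := f_equal snd H). simpl in H1, H2.
    pose proof (sq_pos ta).
    assert (Ht: 1 - ta*ta = 0). { apply (Rmult_eq_reg_r (/(1+ta*ta))). rewrite Rmult_0_l. exact H1. apply Rinv_neq_0_compat; lra. }
    assert (Ht2: 2*ta = 0). { apply (Rmult_eq_reg_r (/(1+ta*ta))). rewrite Rmult_0_l. exact H2. apply Rinv_neq_0_compat; lra. }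
    nra. }
Qed.

Lemma Cinv_mult (a b : C) : a <> 0%C -> b <> 0%C -> (/(a*b) = /a * /b)%C.
Proof. intros. field. auto. Qed.

Lemma mob_inv ta : (/ mob ta = mob (-ta))%C.
Proof.
  pose proof (mob_ne0 ta) as Hn.
  rewrite <- (Cmult_1_l (/ mob ta)). apply Cdiv_eq; auto.
  pose proof (sq_pos ta).
  ceq; unfold Cmult; simpl; field; lra.
Qed.

Lemma id_a t : (mob t * mob t - 1 = mob t * (Ci * RtoC (2 * sn t)))%C.
Proof. pose proof (sq_pos t). unfold sn. ceq; field; repeat split; lra. Qed.

Lemma Cnorm_ne0 (z : C) : fst z * fst z + snd z * snd z <> 0 -> z <> 0%C.
Proof. intros H E. subst z. simpl in H. lra. Qed.

Lemma id_f ta t t' : 0 < ta -> 0 < t < ta -> 0 < t' < ta ->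
  (mob ta + mob t * mob t' <> 0)%C.
Proof.
  intros Hta Ht Ht'. apply Cnorm_ne0.
  pose proof (sq_pos ta). pose proof (sq_pos t). pose proof (sq_pos t').
  set (K := 1 - t*t' + ta*(t+t')).
  assert (HK : 0 < K) by (unfold K; nra).
  replace (fst (mob ta + mob t * mob t')%C * fst (mob ta + mob t * mob t')%C +
     snd (mob ta + mob t * mob t')%C * snd (mob ta + mob t * mob t')%C)
   with (4*K*K/((1+ta*ta)*(1+t*t)*(1+t'*t'))).
  2:{ unfold K. simpl. field. repeat split; lra. }
  apply Rgt_not_eq. apply Rlt_gt. apply Rdiv_lt_0_compat. nra.
  apply Rmult_lt_0_compat; [apply Rmult_lt_0_compat|]; lra.
Qed.

Lemma sf_pos ta t : 0 < ta -> 0 < t < ta -> 0 < sf ta t.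
Proof. intros. unfold sf. apply Rdiv_lt_0_compat; nra. Qed.

Lemma id_b ta t t' : 0 < ta -> 0 < t < ta -> 0 < t' < ta ->
  ((mob t' + mob t / mob ta) / (mob ta + mob t * mob t') = RtoC (rr ta t t') * mob (-ta))%C.
Proof.
  intros Hta Ht Ht'. apply Cdiv_eq. apply id_f; auto.
  unfold Cdiv. rewrite mob_inv.
  pose proof (sq_pos ta). pose proof (sq_pos t). pose proof (sq_pos t').
  pose proof (sf_pos ta t Hta Ht).
  assert (0 < 1 + ta*t) by nra.
  assert (0 < 1 + sf ta t * t') by nra.
  assert (0 < 1 + ta*t + (ta-t)*t') by nra.
  unfold rr. unfold sf in *. ceq; field; repeat split; lra.
Qed.

Lemma id_c ta tm t : 0 < ta -> 0 < tm < ta -> 0 < t < ta ->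
  ((mob tm + mob ta * mob t) / (mob ta + mob tm * mob t) = RtoC (rr ta tm t))%C.
Proof.
  intros Hta Ht Ht'. apply Cdiv_eq. apply id_f; auto.
  pose proof (sq_pos ta). pose proof (sq_pos t). pose proof (sq_pos tm).
  pose proof (sf_pos ta tm Hta Ht).
  assert (0 < 1 + ta*tm) by nra.
  assert (0 < 1 + sf ta tm * t) by nra.
  assert (0 < 1 + ta*tm + (ta-tm)*t) by nra.
  unfold rr. unfold sf in *. ceq; field; repeat split; lra.
Qed.

Lemma id_d ta t : 0 < ta -> 0 < t < ta ->
  (1 - mob t * mob t / (mob ta * mob ta) = mob t * mob (-ta) * (Ci * RtoC (2 * sn (sf ta t))))%C.
Proof.
  intros Hta Ht. unfold Cdiv. rewrite Cinv_mult, mob_inv by apply mob_ne0.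
  pose proof (sq_pos ta). pose proof (sq_pos t).
  assert (0 < 1 + ta*t) by nra.
  pose proof (sq_pos (sf ta t)).
  assert (0 < (1+ta*t)*(1+ta*t) + (ta-t)*(ta-t)) by nra.
  unfold sn. unfold sf in *. ceq; field; repeat split; lra.
Qed.

Lemma Cmult_ne0 (a b : C) : a <> 0%C -> b <> 0%C -> (a*b <> 0)%C.
Proof.
  intros Ha Hb E. apply Hb.
  replace b with (/a * (a*b))%C by (field; auto). rewrite E. ring.
Qed.

Lemma id_e ta : 0 < ta ->
  ((mob ta * mob ta - 1) / (2 * (mob ta * mob ta)) = mob (-ta) * (Ci * RtoC (sn ta)))%C.
Proof.
  intros Hta. apply Cdiv_eq.
  apply Cmult_ne0. intro E; injection E; lra. apply Cmult_ne0; apply mob_ne0.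
  pose proof (sq_pos ta).
  unfold sn. ceq; field; repeat split; lra.
Qed.

Lemma main_id ta c n tm t t' : 0 < ta -> 0 < tm < ta -> 0 < t < ta -> 0 < t' < ta ->
  INR (S n) * sn t * rr ta t t' = c * sn ta / 2 + INR n * sn (sf ta t) * rr ta tm t ->
  (term1 (mob ta) n (mob t) (mob t') - term2 (mob ta) n (mob tm) (mob t))%C = rhs (mob ta) c (mob t).
Proof.
  intros Hta Htm Ht Ht' Hrel.
  unfold term1, term2, rhs.
  rewrite id_a, id_b, id_c, id_d, id_e; auto.
  transitivity (mob t * mob (-ta) * Ci *
     RtoC (2 * (INR (S n) * sn t * rr ta t t') - 2 * (INR n * sn (sf ta t) * rr ta tm t)))%C.
  { rewrite !RtoC_minus, !RtoC_mult. ring. }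
  rewrite Hrel.
  replace (2 * (c * sn ta / 2 + INR n * sn (sf ta t) * rr ta tm t) -
     2 * (INR n * sn (sf ta t) * rr ta tm t)) with (c * sn ta) by field.
  rewrite RtoC_mult. ring.
Qed.

Lemma cont_pos (H : R -> R) x : continuity_pt H x -> 0 < H x ->
  exists d, 0 < d /\ forall y, Rabs (y - x) < d -> 0 < H y.
Proof.
  intros Hc Hx.
  destruct (Hc (H x) Hx) as [d [Hd Hy]].
  exists d. split; auto. intros y Hyd.
  destruct (Req_dec y x) as [->|Hne]. auto.
  assert (Hdist := Hy y (conj (conj I (not_eq_sym Hne)) Hyd)).
  simpl in Hdist. unfold R_dist in Hdist.
  apply Rabs_def2 in Hdist. lra.
Qed.

Lemma cont_neg (H : R -> R) x : continuity_pt H x -> H x < 0 ->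
  exists d, 0 < d /\ forall y, Rabs (y - x) < d -> H y < 0.
Proof.
  intros Hc Hx.
  assert (Hc' : continuity_pt (fun y => - H y) x).
  { apply (continuity_pt_opp H x Hc). }
  destruct (cont_pos _ x Hc' ltac:(lra)) as [d [Hd Hy]].
  exists d. split; auto. intros y Hyd. specialize (Hy y Hyd). lra.
Qed.

Lemma near_pos (H : R -> R) p q : p <> q -> continuity_pt H p -> 0 < H p ->
  exists x, Rmin p q < x < Rmax p q /\ 0 < H x.
Proof.
  intros Hpq Hc Hp. destruct (cont_pos H p Hc Hp) as [d [Hd Hy]].
  set (e := Rmin (d/2) (Rabs (q - p) / 2)).
  assert (He : 0 < e).
  { unfold e. apply Rmin_pos. lra. apply Rdiv_lt_0_compat; [|lra]. apply Rabs_pos_lt. lra. }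
  assert (He1 : e <= d/2) by apply Rmin_l.
  assert (He2 : e <= Rabs (q-p)/2) by apply Rmin_r.
  destruct (Rlt_or_le p q) as [Hlt|Hle].
  - rewrite Rabs_right in He2 by lra.
    exists (p + e). rewrite Rmin_left, Rmax_right by lra. split. lra.
    apply Hy. replace (p + e - p) with e by ring. rewrite Rabs_right; lra.
  - rewrite Rabs_left in He2 by lra.
    exists (p - e). rewrite Rmin_right, Rmax_left by lra. split. lra.
    apply Hy. replace (p - e - p) with (-e) by ring. rewrite Rabs_Ropp, Rabs_right; lra.
Qed.

Lemma near_neg (H : R -> R) p q : p <> q -> continuity_pt H p -> H p < 0 ->
  exists x, Rmin p q < x < Rmax p q /\ H x < 0.
Proof.
  intros Hpq Hc Hp.
  destruct (near_pos (fun y => - H y) p q Hpq (continuity_pt_opp H p Hc) ltac:(lra)) as [x [Hx1 Hx2]].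
  exists x. split; auto. lra.
Qed.

Lemma first_zero (H : R -> R) a b : a < b ->
  (forall x, a <= x <= b -> continuity_pt H x) -> 0 < H a -> H b < 0 ->
  exists z, a < z < b /\ H z = 0 /\ forall x, a <= x < z -> 0 < H x.
Proof.
  intros Hab Hc Ha Hb.
  set (E := fun x => a <= x <= b /\ forall y, a <= y <= x -> 0 < H y).
  assert (Hbd : bound E). { exists b. intros x [Hx _]. lra. }
  assert (Hne : exists x, E x). { exists a. split. lra. intros y Hy. replace y with a by lra. auto. }
  destruct (completeness E Hbd Hne) as [z [Hub Hlub]].
  assert (Haz : a <= z). { apply Hub. split. lra. intros y Hy. replace y with a by lra. auto. }
  assert (Hzb : z <= b). { apply Hlub. intros x [Hx _]. lra. }
  assert (Hbelow : forall x, a <= x < z -> 0 < H x).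
  { intros x Hx. destruct (Rle_lt_dec x a) as [Hxa|Hxa].
    - replace x with a by lra. auto.
    -
      destruct (classic (exists w, E w /\ x < w)) as [[w [[Hw1 Hw2] Hxw]]|Hno].
      + apply Hw2. lra.
      + exfalso. assert (z <= x). { apply Hlub. intros w Hw. apply Rnot_lt_le. intro Hlt. apply Hno. exists w; auto. }
        lra. }
  assert (Hz_not_pos : ~ 0 < H z).
  { intro Hpos. destruct (cont_pos H z (Hc z (conj Haz Hzb)) Hpos) as [d [Hd Hy]].
    destruct (Rlt_or_le z b) as [Hzb'|Hzb'].
    - set (w := Rmin (z + d/2) b).
      assert (Hw : z < w <= b). { unfold w. split. apply Rmin_glb_lt; lra. apply Rmin_r. }
      assert (Hww : w <= z + d/2) by apply Rmin_l.
      assert (E w).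
      { split. lra. intros y Hyy. destruct (Rlt_or_le y z). apply Hbelow; lra.
        apply Hy. rewrite Rabs_right; lra. }
      assert (w <= z) by (apply Hub; auto). lra.
    - replace z with b in Hpos by lra. lra. }
  assert (Hz_not_neg : ~ H z < 0).
  { intro Hneg. destruct (cont_neg H z (Hc z (conj Haz Hzb)) Hneg) as [d [Hd Hy]].
    destruct (Rle_lt_dec z a) as [Hza|Hza].
    - replace z with a in Hneg by lra. lra.
    - set (w := Rmax (z - d/2) a).
      assert (Hw : a <= w < z). { unfold w. split. apply Rmax_r. apply Rmax_lub_lt; lra. }
      assert (Hww : z - d/2 <= w) by apply Rmax_l.
      assert (0 < H w) by (apply Hbelow; lra).
      assert (H w < 0). { apply Hy. rewrite Rabs_left; lra. } lra. }
  assert (HHz : H z = 0) by lra.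
  exists z. split; [split|split]; auto.
  - destruct (Req_dec a z) as [E1|E1]; [subst; lra|lra].
  - destruct (Req_dec z b) as [E1|E1]; [subst; lra|lra].
Qed.

Lemma last_zero (H : R -> R) a b : a < b ->
  (forall x, a <= x <= b -> continuity_pt H x) -> 0 < H a -> H b < 0 ->
  exists z, a < z < b /\ H z = 0 /\ forall x, z < x <= b -> H x < 0.
Proof.
  intros Hab Hc Ha Hb.
  set (K := fun y => - H (- y)).
  assert (HcK : forall y, -b <= y <= -a -> continuity_pt K y).
  { intros y Hy. unfold K. apply (continuity_pt_opp (fun y => H (- y))).
    apply (continuity_pt_comp (fun y => - y) H). apply (continuity_pt_opp (fun y => y)). apply derivable_continuous_pt, derivable_pt_id.
    apply Hc. lra. }
  assert (HK1 : 0 < K (-b)) by (unfold K; rewrite Ropp_involutive; lra).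
  assert (HK2 : K (-a) < 0) by (unfold K; rewrite Ropp_involutive; lra).
  destruct (first_zero K (-b) (-a) ltac:(lra) HcK HK1 HK2) as [w [Hw [HKw Hbel]]].
  { exists (-w). split. lra. split.
    + unfold K in HKw. lra.
    + intros x Hx. specialize (Hbel (-x) ltac:(lra)). unfold K in Hbel. rewrite Ropp_involutive in Hbel. lra. }
Qed.

Lemma cp_const' (a x : R) : continuity_pt (fun _ => a) x.
Proof. apply continuity_pt_const. intros ? ?; auto. Qed.

Lemma cross1 (F G : R -> R) u v : u < v ->
  (forall x, u <= x <= v -> continuity_pt F x /\ continuity_pt G x) ->
  (forall x, u <= x <= v -> G x < 1) -> 1 < F u -> F v < G v ->
  exists u' v', u < u' < v' /\ v' < v /\ F u' = 1 /\ F v' = G v' /\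
    forall x, u' < x < v' -> G x < F x < 1.
Proof.
  intros Huv Hc HG Hu Hv.
  assert (C1 : forall x, u <= x <= v -> continuity_pt (fun x => F x - 1) x).
  { intros x Hx. apply (continuity_pt_minus F (fun _ => 1)). apply Hc; auto. apply cp_const'. }
  assert (HGv : G v < 1) by (apply HG; lra).
  destruct (last_zero (fun x => F x - 1) u v Huv C1 ltac:(lra) ltac:(lra)) as [u' [Hu' [HF1 Hlt1]]].
  assert (C2 : forall x, u' <= x <= v -> continuity_pt (fun x => F x - G x) x).
  { intros x Hx. apply (continuity_pt_minus F G); apply Hc; lra. }
  assert (HGu : G u' < 1) by (apply HG; lra).
  destruct (first_zero (fun x => F x - G x) u' v ltac:(lra) C2 ltac:(lra) ltac:(lra)) as [v' [Hv' [HF2 Hgt2]]].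
  exists u', v'. split. lra. split. lra. split. lra. split. lra.
  intros x Hx. pose proof (Hgt2 x ltac:(lra)). pose proof (Hlt1 x ltac:(lra)). simpl in *. lra.
Qed.

Lemma cross2 (F G : R -> R) u v : u < v ->
  (forall x, u <= x <= v -> continuity_pt F x /\ continuity_pt G x) ->
  (forall x, u <= x <= v -> G x < 1) -> F u < G u -> 1 < F v ->
  exists u' v', u < u' < v' /\ v' < v /\ F u' = G u' /\ F v' = 1 /\
    forall x, u' < x < v' -> G x < F x < 1.
Proof.
  intros Huv Hc HG Hu Hv.
  assert (C1 : forall x, u <= x <= v -> continuity_pt (fun x => G x - F x) x).
  { intros x Hx. apply (continuity_pt_minus G F); apply Hc; auto. }
  assert (HGv : G v < 1) by (apply HG; lra).
  destruct (last_zero (fun x => G x - F x) u v Huv C1 ltac:(lra) ltac:(lra)) as [u' [Hu' [HF1 Hlt1]]].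
  assert (C2 : forall x, u' <= x <= v -> continuity_pt (fun x => 1 - F x) x).
  { intros x Hx. apply (continuity_pt_minus (fun _ => 1) F). apply cp_const'. apply Hc; lra. }
  assert (HGu : G u' < 1) by (apply HG; lra).
  destruct (first_zero (fun x => 1 - F x) u' v ltac:(lra) C2 ltac:(lra) ltac:(lra)) as [v' [Hv' [HF2 Hgt2]]].
  exists u', v'. split. lra. split. lra. split. lra. split. lra.
  intros x Hx. pose proof (Hgt2 x ltac:(lra)). pose proof (Hlt1 x ltac:(lra)). simpl in *. lra.
Qed.

Lemma cp_plus f g x : continuity_pt f x -> continuity_pt g x -> continuity_pt (fun y => f y + g y) x.
Proof. intros; apply (continuity_pt_plus f g x); auto. Qed.
Lemma cp_minus f g x : continuity_pt f x -> continuity_pt g x -> continuity_pt (fun y => f y - g y) x.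
Proof. intros; apply (continuity_pt_minus f g x); auto. Qed.
Lemma cp_mult f g x : continuity_pt f x -> continuity_pt g x -> continuity_pt (fun y => f y * g y) x.
Proof. intros; apply (continuity_pt_mult f g x); auto. Qed.
Lemma cp_div f g x : continuity_pt f x -> continuity_pt g x -> g x <> 0 -> continuity_pt (fun y => f y / g y) x.
Proof. intros; apply (continuity_pt_div f g x); auto. Qed.
Lemma cp_const a x : continuity_pt (fun _ => a) x.
Proof. apply continuity_pt_const. intros ? ?; auto. Qed.
Lemma cp_id x : continuity_pt (fun y => y) x.
Proof. apply continuity_pt_id. Qed.

Ltac cont_tac :=
  repeat match goal with
  | |- continuity_pt (fun y => @?A y + @?B y) ?x => apply (cp_plus A B x)
  | |- continuity_pt (fun y => @?A y - @?B y) ?x => apply (cp_minus A B x)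
  | |- continuity_pt (fun y => @?A y * @?B y) ?x => apply (cp_mult A B x)
  | |- continuity_pt (fun y => @?A y / @?B y) ?x => apply (cp_div A B x)
  | |- continuity_pt (fun y => y) ?x => apply cp_id
  | |- continuity_pt (fun _ => ?a) ?x => apply cp_const
  end.

Lemma cont_sn f x : continuity_pt f x -> continuity_pt (fun y => sn (f y)) x.
Proof.
  intros Hf. unfold sn. cont_tac; auto. pose proof (sq_pos (f x)). lra.
Qed.

Lemma cont_sf ta f x : 0 < ta -> 0 <= f x -> continuity_pt f x -> continuity_pt (fun y => sf ta (f y)) x.
Proof.
  intros Hta Hfx Hf. unfold sf. cont_tac; auto. nra.
Qed.

Definition Rnext ta c (n:nat) (t Rp : R) :=
  (c * sn ta / 2 + INR n * sn (sf ta t) * Rp) / (INR (S n) * sn t).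
Definition tnext ta t R := (1 - R) / ((1 + R) * sf ta t).
Fixpoint orb ta c t0 (n:nat) : R*R :=
  match n with
  | O => (t0, 0)
  | S m => (tnext ta (fst (orb ta c t0 m)) (Rnext ta c m (fst (orb ta c t0 m)) (snd (orb ta c t0 m))),
            Rnext ta c m (fst (orb ta c t0 m)) (snd (orb ta c t0 m)))
  end.
Definition tt ta c n t0 := fst (orb ta c t0 n).
Definition Rp ta c n t0 := snd (orb ta c t0 n).
Definition RR ta c n t0 := Rnext ta c n (tt ta c n t0) (Rp ta c n t0).
Definition Amin ta u := rr ta u ta.
Definition good ta c k t0 := Amin ta (tt ta c k t0) < RR ta c k t0 < 1.

Lemma tt_S ta c n t0 : tt ta c (S n) t0 = tnext ta (tt ta c n t0) (RR ta c n t0).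
Proof. reflexivity. Qed.
Lemma Rp_S ta c n t0 : Rp ta c (S n) t0 = RR ta c n t0.
Proof. reflexivity. Qed.
Lemma tt_0 ta c t0 : tt ta c 0 t0 = t0.
Proof. reflexivity. Qed.
Lemma Rp_0 ta c t0 : Rp ta c 0 t0 = 0.
Proof. reflexivity. Qed.

Lemma Amin_gt ta u : 0 < ta -> 0 < u < ta -> -1 < Amin ta u < 1.
Proof.
  intros Hta Hu. pose proof (sf_pos ta u Hta Hu). unfold Amin, rr.
  assert (0 < sf ta u * ta) by nra.
  split.
  - apply (Rmult_lt_reg_r (1 + sf ta u * ta)). lra. unfold Rdiv. rewrite Rmult_assoc, Rinv_l; lra.
  - apply (Rmult_lt_reg_r (1 + sf ta u * ta)). lra. unfold Rdiv. rewrite Rmult_assoc, Rinv_l; lra.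
Qed.

Lemma tnext_in ta u R : 0 < ta -> 0 < u < ta -> Amin ta u < R < 1 -> 0 < tnext ta u R < ta.
Proof.
  intros Hta Hu HR. pose proof (sf_pos ta u Hta Hu) as Hs. pose proof (Amin_gt ta u Hta Hu).
  unfold Amin, rr in *. set (s := sf ta u) in *.
  assert (HR1 : R * (1 + s*ta) > 1 - s*ta).
  { destruct HR as [HR _]. apply (Rmult_lt_compat_r (1 + s*ta)) in HR; [|nra].
    unfold Rdiv in HR. rewrite Rmult_assoc, Rinv_l in HR; nra. }
  unfold tnext. fold s. split.
  - apply Rdiv_lt_0_compat; nra.
  - apply (Rmult_lt_reg_r ((1+R)*s)). nra. unfold Rdiv. rewrite Rmult_assoc, Rinv_l; nra.
Qed.

Lemma rr_tnext ta u R : 0 < ta -> 0 < u < ta -> -1 < R -> rr ta u (tnext ta u R) = R.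
Proof.
  intros Hta Hu HR. pose proof (sf_pos ta u Hta Hu) as Hs.
  unfold rr, tnext. field. split; nra.
Qed.

Lemma tnext_1 ta u : 0 < ta -> 0 < u < ta -> tnext ta u 1 = 0.
Proof. intros. unfold tnext. unfold Rdiv. rewrite Rminus_diag, Rmult_0_l. reflexivity. Qed.

Lemma tnext_Amin ta u : 0 < ta -> 0 < u < ta -> tnext ta u (Amin ta u) = ta.
Proof.
  intros Hta Hu. pose proof (sf_pos ta u Hta Hu) as Hs.
  unfold tnext, Amin, rr. field. split; nra.
Qed.

Lemma tt_in ta c t0 N : 0 < ta -> 0 < t0 < ta ->
  (forall k, (k < N)%nat -> good ta c k t0) -> forall k, (k <= N)%nat -> 0 < tt ta c k t0 < ta.
Proof.
  intros Hta Ht0 Hg k. induction k as [|k IH]; intros Hk.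
  - rewrite tt_0; auto.
  - rewrite tt_S. apply tnext_in; auto. apply IH; lia. apply Hg; lia.
Qed.

Lemma cont_RR ta c N t0 : 0 < ta ->
  continuity_pt (tt ta c N) t0 -> continuity_pt (Rp ta c N) t0 -> 0 < tt ta c N t0 < ta ->
  continuity_pt (RR ta c N) t0.
Proof.
  intros Hta H1 H2 Hin.
  change (continuity_pt (fun y => (c * sn ta / 2 + INR N * sn (sf ta (tt ta c N y)) * Rp ta c N y) /
     (INR (S N) * sn (tt ta c N y))) t0).
  cont_tac; auto.
  - apply cont_sn. apply cont_sf; auto. lra.
  - apply cont_sn; auto.
  - apply Rgt_not_eq. apply Rmult_lt_0_compat. apply lt_0_INR; lia.
    unfold sn. apply Rdiv_lt_0_compat. lra. pose proof (sq_pos (tt ta c N t0)). lra.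
Qed.

Lemma cont_ttS ta c N t0 : 0 < ta ->
  continuity_pt (tt ta c N) t0 -> continuity_pt (RR ta c N) t0 -> 0 < tt ta c N t0 < ta ->
  -1 < RR ta c N t0 -> continuity_pt (tt ta c (S N)) t0.
Proof.
  intros Hta H1 H2 Hin HR.
  change (continuity_pt (fun y => (1 - RR ta c N y) / ((1 + RR ta c N y) * sf ta (tt ta c N y))) t0).
  cont_tac; auto.
  - apply cont_sf; auto. lra.
  - pose proof (sf_pos ta _ Hta Hin). apply Rgt_not_eq. apply Rmult_lt_0_compat; lra.
Qed.

Lemma cont_orb ta c t0 N : 0 < ta ->
  (forall k, (k < N)%nat -> 0 < tt ta c k t0 < ta /\ -1 < RR ta c k t0) ->
  continuity_pt (tt ta c N) t0 /\ continuity_pt (Rp ta c N) t0.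
Proof.
  intros Hta. induction N as [|N IH]; intros H.
  - split. exact (cp_id t0). exact (cp_const 0 t0).
  - destruct IH as [IH1 IH2]. intros k Hk; apply H; lia.
    destruct (H N ltac:(lia)) as [Hin HR].
    assert (HRc : continuity_pt (RR ta c N) t0) by (apply cont_RR; auto).
    split.
    + apply cont_ttS; auto.
    + exact HRc.
Qed.

Lemma sn_pos u : 0 < u -> 0 < sn u.
Proof. intros. unfold sn. apply Rdiv_lt_0_compat. lra. pose proof (sq_pos u); lra. Qed.
Lemma sn_0 : sn 0 = 0.
Proof. unfold sn. unfold Rdiv. ring. Qed.
Lemma sf_0 ta : sf ta 0 = ta.
Proof. unfold sf. rewrite Rmult_0_r, Rplus_0_r, Rminus_0_r. field. Qed.
Lemma sf_ta ta : 0 < ta -> sf ta ta = 0.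
Proof. intros. unfold sf. unfold Rdiv. rewrite Rminus_diag. ring. Qed.
Lemma Amin_ta ta : 0 < ta -> Amin ta ta = 1.
Proof. intros. unfold Amin, rr. rewrite sf_ta by auto. field. Qed.

Lemma cont_Amin ta f x : 0 < ta -> 0 <= f x <= ta -> continuity_pt f x ->
  continuity_pt (fun y => Amin ta (f y)) x.
Proof.
  intros Hta Hfx Hf. unfold Amin, rr.
  assert (Hs : continuity_pt (fun y => sf ta (f y)) x) by (apply cont_sf; auto; lra).
  assert (0 <= sf ta (f x)). { unfold sf. apply Rdiv_le_0_compat; nra. }
  cont_tac; auto. nra.
Qed.

Lemma ratio_gt1 n d : 0 < d -> 0 < n - d -> 1 < n / d.
Proof. intros. apply (Rmult_lt_reg_r d); auto. unfold Rdiv. rewrite Rmult_assoc, Rinv_l; lra. Qed.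
Lemma ratio_lt n d A : 0 < d -> n - d * A < 0 -> n / d < A.
Proof. intros. apply (Rmult_lt_reg_r d); auto. unfold Rdiv. rewrite Rmult_assoc, Rinv_l; lra. Qed.

Definition Inv ta c N a b := 0 < a /\ a < b /\ b < ta /\
  (forall t0, a <= t0 <= b -> forall k, (k < N)%nat -> good ta c k t0) /\
  ((1 < RR ta c N a /\ RR ta c N b < Amin ta (tt ta c N b)) \/
   (RR ta c N a < Amin ta (tt ta c N a) /\ 1 < RR ta c N b)).

Definition gf ta c N x := c * sn ta / 2 + INR (S N) * sn (sf ta (tt ta c (S N) x)) * RR ta c N x
   - INR (S (S N)) * sn (tt ta c (S N) x).
Definition hf ta c N x := c * sn ta / 2 + INR (S N) * sn (sf ta (tt ta c (S N) x)) * RR ta c N x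
   - INR (S (S N)) * sn (tt ta c (S N) x) * Amin ta (tt ta c (S N) x).

Lemma RRS_eq ta c N x : RR ta c (S N) x =
  (c * sn ta / 2 + INR (S N) * sn (sf ta (tt ta c (S N) x)) * RR ta c N x) /
  (INR (S (S N)) * sn (tt ta c (S N) x)).
Proof. reflexivity. Qed.

Lemma RRS_gt1 ta c N x : 0 < tt ta c (S N) x -> 0 < gf ta c N x -> 1 < RR ta c (S N) x.
Proof.
  intros H1 H2. rewrite RRS_eq. apply ratio_gt1.
  apply Rmult_lt_0_compat. apply lt_0_INR; lia. apply sn_pos; auto.
  unfold gf in H2. lra.
Qed.

Lemma RRS_lt ta c N x : 0 < tt ta c (S N) x -> hf ta c N x < 0 ->
  RR ta c (S N) x < Amin ta (tt ta c (S N) x).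
Proof.
  intros H1 H2. rewrite RRS_eq. apply ratio_lt.
  apply Rmult_lt_0_compat. apply lt_0_INR; lia. apply sn_pos; auto.
  unfold hf in H2. lra.
Qed.

Lemma cont_gf ta c N x : 0 < ta -> 0 <= tt ta c (S N) x ->
  continuity_pt (tt ta c (S N)) x -> continuity_pt (RR ta c N) x -> continuity_pt (gf ta c N) x.
Proof.
  intros Hta H0 H1 H2. unfold gf. cont_tac; auto.
  apply cont_sn, cont_sf; auto. apply cont_sn; auto.
Qed.

Lemma cont_hf ta c N x : 0 < ta -> 0 <= tt ta c (S N) x <= ta ->
  continuity_pt (tt ta c (S N)) x -> continuity_pt (RR ta c N) x -> continuity_pt (hf ta c N) x.
Proof.
  intros Hta H0 H1 H2. unfold hf. cont_tac; auto.
  apply cont_sn, cont_sf; auto; lra. apply cont_sn; auto.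
  apply (cont_Amin ta (tt ta c (S N))); auto.
Qed.

Lemma INR_SS_ge2 N : 2 <= INR (S (S N)).
Proof. rewrite !S_INR. pose proof (pos_INR N). lra. Qed.

Lemma step ta c N a b : 0 < ta -> 0 < c < 2 -> Inv ta c N a b ->
  exists a' b', a < a' /\ b' < b /\ Inv ta c (S N) a' b'.
Proof.
  intros Hta Hc [Ha [Hab [Hb [Hg Hcase]]]].
  assert (Hin : forall x, a <= x <= b -> forall k, (k <= N)%nat -> 0 < tt ta c k x < ta).
  { intros x Hx. apply tt_in; auto. lra. }
  assert (Hc0 : forall x, a <= x <= b -> continuity_pt (tt ta c N) x /\ continuity_pt (Rp ta c N) x).
  { intros x Hx. apply cont_orb; auto. intros k Hk. split. apply Hin; auto; lia.
    destruct (Hg x Hx k Hk). pose proof (Amin_gt ta (tt ta c k x) Hta (Hin x Hx k ltac:(lia))). lra. }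
  set (F := RR ta c N). set (G := fun y => Amin ta (tt ta c N y)).
  assert (HcF : forall x, a <= x <= b -> continuity_pt F x).
  { intros x Hx. apply cont_RR; auto; try apply Hc0; auto. }
  assert (HcFG : forall x, a <= x <= b -> continuity_pt F x /\ continuity_pt G x).
  { intros x Hx. split; auto. apply cont_Amin; auto. pose proof (Hin x Hx N (le_n N)); lra. apply Hc0; auto. }
  assert (HGb : forall x, a <= x <= b -> -1 < G x < 1).
  { intros x Hx. apply Amin_gt; auto. }
  assert (HG1 : forall x, a <= x <= b -> G x < 1). { intros x Hx. apply HGb; auto. }
  assert (Hsn : 0 < sn ta) by (apply sn_pos; auto).
  assert (HSN := pos_INR (S N)). assert (HSSN := INR_SS_ge2 N).
  destruct Hcase as [[H1 H2]|[H1 H2]].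
  - destruct (cross1 F G a b Hab HcFG HG1 H1 H2) as [u' [v' [Hu [Hv [HFu [HFv Hmid]]]]]].
    assert (Hrng : forall x, u' <= x <= v' -> -1 < F x).
    { intros x Hx. destruct (Req_dec x u') as [->|Hx1]. lra.
      destruct (Req_dec x v') as [->|Hx2]. rewrite HFv. apply HGb; lra.
      pose proof (Hmid x ltac:(lra)). pose proof (HGb x ltac:(lra)). lra. }
    assert (HcT : forall x, u' <= x <= v' -> continuity_pt (tt ta c (S N)) x).
    { intros x Hx. apply cont_ttS; [exact Hta | apply Hc0; lra | apply HcF; lra | apply (Hin x ltac:(lra) N (le_n N)) | apply Hrng; auto]. }
    assert (Tu : tt ta c (S N) u' = 0).
    { rewrite tt_S. fold F. rewrite HFu. apply tnext_1; auto. apply (Hin u' ltac:(lra) N (le_n N)). }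
    assert (Tv : tt ta c (S N) v' = ta).
    { rewrite tt_S. fold F. rewrite HFv. apply tnext_Amin; auto. apply (Hin v' ltac:(lra) N (le_n N)). }
    assert (Hgu : 0 < gf ta c N u').
    { unfold gf. rewrite Tu. fold F. rewrite HFu, sf_0, sn_0. nra. }
    assert (Hhv : hf ta c N v' < 0).
    { unfold hf. rewrite Tv. rewrite sf_ta, sn_0, Amin_ta by auto. nra. }
    set (m := (u' + v') / 2).
    destruct (near_pos (gf ta c N) u' m) as [a1 [Ha1 Hga1]].
    { unfold m; lra. }
    { apply cont_gf; auto. lra. apply HcT; lra. apply HcF; lra. }
    auto.
    destruct (near_neg (hf ta c N) v' m) as [b1 [Hb1 Hhb1]].
    { unfold m; lra. }
    { apply cont_hf; auto. lra. apply HcT; lra. apply HcF; lra. }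
    auto.
    rewrite Rmin_left, Rmax_right in Ha1 by (unfold m; lra).
    rewrite Rmin_right, Rmax_left in Hb1 by (unfold m; lra).
    assert (Hgood : forall t0, a1 <= t0 <= b1 -> forall k, (k < S N)%nat -> good ta c k t0).
    { intros t0 Ht0 k Hk. destruct (Nat.eq_dec k N) as [->|Hne].
      - unfold good. apply Hmid. unfold m in *; lra.
      - apply Hg. unfold m in *; lra. lia. }
    assert (HT1 : forall t0, a1 <= t0 <= b1 -> 0 < tt ta c (S N) t0 < ta).
    { intros t0 Ht0. apply tt_in with (N := S N); auto. unfold m in *; lra. }
    exists a1, b1. split. unfold m in *; lra. split. unfold m in *; lra.
    split. unfold m in *; lra. split. unfold m in *; lra. split. unfold m in *; lra.
    split. auto. left. split.
    + apply RRS_gt1; auto. apply HT1. unfold m in *; lra.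
    + apply RRS_lt; auto. apply HT1. unfold m in *; lra.
  - destruct (cross2 F G a b Hab HcFG HG1 H1 H2) as [u' [v' [Hu [Hv [HFu [HFv Hmid]]]]]].
    assert (Hrng : forall x, u' <= x <= v' -> -1 < F x).
    { intros x Hx. destruct (Req_dec x v') as [->|Hx1]. lra.
      destruct (Req_dec x u') as [->|Hx2]. rewrite HFu. apply HGb; lra.
      pose proof (Hmid x ltac:(lra)). pose proof (HGb x ltac:(lra)). lra. }
    assert (HcT : forall x, u' <= x <= v' -> continuity_pt (tt ta c (S N)) x).
    { intros x Hx. apply cont_ttS; [exact Hta | apply Hc0; lra | apply HcF; lra | apply (Hin x ltac:(lra) N (le_n N)) | apply Hrng; auto]. }
    assert (Tv : tt ta c (S N) v' = 0).
    { rewrite tt_S. fold F. rewrite HFv. apply tnext_1; auto. apply (Hin v' ltac:(lra) N (le_n N)). }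
    assert (Tu : tt ta c (S N) u' = ta).
    { rewrite tt_S. fold F. rewrite HFu. apply tnext_Amin; auto. apply (Hin u' ltac:(lra) N (le_n N)). }
    assert (Hgv : 0 < gf ta c N v').
    { unfold gf. rewrite Tv. fold F. rewrite HFv, sf_0, sn_0. nra. }
    assert (Hhu : hf ta c N u' < 0).
    { unfold hf. rewrite Tu. rewrite sf_ta, sn_0, Amin_ta by auto. nra. }
    set (m := (u' + v') / 2).
    destruct (near_pos (gf ta c N) v' m) as [a1 [Ha1 Hga1]].
    { unfold m; lra. }
    { apply cont_gf; auto. lra. apply HcT; lra. apply HcF; lra. }
    auto.
    destruct (near_neg (hf ta c N) u' m) as [b1 [Hb1 Hhb1]].
    { unfold m; lra. }
    { apply cont_hf; auto. lra. apply HcT; lra. apply HcF; lra. }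
    auto.
    rewrite Rmin_right, Rmax_left in Ha1 by (unfold m; lra).
    rewrite Rmin_left, Rmax_right in Hb1 by (unfold m; lra).
    assert (Hgood : forall t0, b1 <= t0 <= a1 -> forall k, (k < S N)%nat -> good ta c k t0).
    { intros t0 Ht0 k Hk. destruct (Nat.eq_dec k N) as [->|Hne].
      - unfold good. apply Hmid. unfold m in *; lra.
      - apply Hg. unfold m in *; lra. lia. }
    assert (HT1 : forall t0, b1 <= t0 <= a1 -> 0 < tt ta c (S N) t0 < ta).
    { intros t0 Ht0. apply tt_in with (N := S N); auto. unfold m in *; lra. }
    exists b1, a1. split. unfold m in *; lra. split. unfold m in *; lra.
    split. unfold m in *; lra. split. unfold m in *; lra. split. unfold m in *; lra.
    split. auto. right. split.
    + apply RRS_lt; auto. apply HT1. unfold m in *; lra.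
    + apply RRS_gt1; auto. apply HT1. unfold m in *; lra.
Qed.

Lemma RR0_eq ta c x : RR ta c 0 x = (c * sn ta / 2 + INR 0 * sn (sf ta x) * 0) / (INR 1 * sn x).
Proof. reflexivity. Qed.

Lemma base ta c : 0 < ta -> 0 < c < 2 -> exists a b, Inv ta c 0 a b.
Proof.
  intros Hta Hc.
  assert (Hsn : 0 < sn ta) by (apply sn_pos; auto).
  set (g0 := fun x => c * sn ta / 2 + INR 0 * sn (sf ta x) * 0 - INR 1 * sn x).
  set (h0 := fun x => c * sn ta / 2 + INR 0 * sn (sf ta x) * 0 - INR 1 * sn x * Amin ta x).
  assert (Hg0 : 0 < g0 0). { unfold g0. rewrite sn_0. change (INR 0) with 0. change (INR 1) with 1. nra. }
  assert (Hh0 : h0 ta < 0). { unfold h0. rewrite Amin_ta by auto. change (INR 0) with 0. change (INR 1) with 1. nra. }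
  assert (Cg : continuity_pt g0 0).
  { unfold g0. cont_tac. all: first [lra | apply cont_sn, cp_id | (apply cont_sn, cont_sf; [auto|simpl; lra|apply cp_id]) | (apply (cont_Amin ta (fun y => y)); [auto|simpl;lra|apply cp_id])]. }
  assert (Ch : continuity_pt h0 ta).
  { unfold h0. cont_tac. all: first [lra | apply cont_sn, cp_id | (apply cont_sn, cont_sf; [auto|simpl; lra|apply cp_id]) | (apply (cont_Amin ta (fun y => y)); [auto|simpl;lra|apply cp_id])]. }
  destruct (near_pos g0 0 (ta/2) ltac:(lra) Cg Hg0) as [a [Ha Hga]].
  destruct (near_neg h0 ta (ta/2) ltac:(lra) Ch Hh0) as [b [Hb Hhb]].
  rewrite Rmin_left, Rmax_right in Ha by lra.
  rewrite Rmin_right, Rmax_left in Hb by lra.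
  exists a, b. split. lra. split. lra. split. lra. split.
  { intros t0 _ k Hk. lia. }
  left. split.
  - rewrite RR0_eq. apply ratio_gt1. change (INR 1) with 1. rewrite Rmult_1_l. apply sn_pos; lra.
    unfold g0 in Hga. lra.
  - rewrite RR0_eq. rewrite tt_0. apply ratio_lt. change (INR 1) with 1. rewrite Rmult_1_l. apply sn_pos; lra.
    unfold h0 in Hhb. lra.
Qed.

Definition nextI ta c N (p : R*R) : R*R :=
  epsilon (inhabits (0,0)) (fun q => fst p < fst q /\ snd q < snd p /\ Inv ta c (S N) (fst q) (snd q)).
Definition firstI ta c : R*R := epsilon (inhabits (0,0)) (fun p => Inv ta c 0 (fst p) (snd p)).
Fixpoint seqI ta c N : R*R :=
  match N with O => firstI ta c | S m => nextI ta c m (seqI ta c m) end.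

Lemma seqI_inv ta c : 0 < ta -> 0 < c < 2 -> forall N,
  Inv ta c N (fst (seqI ta c N)) (snd (seqI ta c N)) /\
  fst (seqI ta c N) < fst (seqI ta c (S N)) /\ snd (seqI ta c (S N)) < snd (seqI ta c N).
Proof.
  intros Hta Hc.
  assert (HI : forall N, Inv ta c N (fst (seqI ta c N)) (snd (seqI ta c N))).
  { induction N as [|N IH].
    - simpl. unfold firstI. apply (epsilon_spec (inhabits (0,0)) (fun p => Inv ta c 0 (fst p) (snd p))).
      destruct (base ta c Hta Hc) as [a [b Hab]]. exists (a,b). exact Hab.
    - simpl. unfold nextI.
      pose proof (epsilon_spec (inhabits (0,0)) (fun q => fst (seqI ta c N) < fst q /\ snd q < snd (seqI ta c N) /\ Inv ta c (S N) (fst q) (snd q))) as Hs.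
      destruct (step ta c N _ _ Hta Hc IH) as [a' [b' [H1 [H2 H3]]]].
      apply Hs. exists (a', b'). simpl. auto. }
  intros N. split. apply HI. simpl. unfold nextI.
  pose proof (epsilon_spec (inhabits (0,0)) (fun q => fst (seqI ta c N) < fst q /\ snd q < snd (seqI ta c N) /\ Inv ta c (S N) (fst q) (snd q))) as Hs.
  destruct (step ta c N _ _ Hta Hc (HI N)) as [a' [b' [H1 [H2 H3]]]].
  destruct Hs as [Hs1 [Hs2 _]]. exists (a', b'). simpl. auto. auto.
Qed.

Lemma exists_good ta c : 0 < ta -> 0 < c < 2 ->
  exists t0, 0 < t0 < ta /\ forall k, good ta c k t0.
Proof.
  intros Hta Hc.
  set (a := fun n => fst (seqI ta c n)). set (b := fun n => snd (seqI ta c n)).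
  assert (Hs := seqI_inv ta c Hta Hc).
  assert (Hmon : forall n m, (n <= m)%nat -> a n <= a m /\ b m <= b n).
  { intros n m Hnm. induction Hnm. lra.
    destruct (Hs m) as [_ [H1 H2]]. unfold a, b in *. lra. }
  assert (Hab : forall n, a n < b n).
  { intros n. destruct (Hs n) as [[_ [H _]] _]. exact H. }
  assert (Hab2 : forall n m, a n < b m).
  { intros n m. destruct (Hmon n (Nat.max n m) ltac:(lia)). destruct (Hmon m (Nat.max n m) ltac:(lia)).
    pose proof (Hab (Nat.max n m)). lra. }
  set (E := fun x => exists n, x = a n).
  assert (Hbd : bound E). { exists (b 0%nat). intros x [n ->]. left. apply Hab2. }
  assert (Hne : exists x, E x). { exists (a 0%nat). exists 0%nat. reflexivity. }
  destruct (completeness E Hbd Hne) as [L [Hub Hlub]].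
  assert (HaL : forall n, a n <= L). { intros n. apply Hub. exists n. reflexivity. }
  assert (HLb : forall n, L <= b n). { intros n. apply Hlub. intros x [m ->]. left. apply Hab2. }
  exists L. split.
  - destruct (Hs 0%nat) as [[Ha0 [_ [Hb0 _]]] _]. pose proof (HaL 0%nat). pose proof (HLb 0%nat).
    unfold a, b in *. lra.
  - intros k. destruct (Hs (S k)) as [[_ [_ [_ [Hg _]]]] _]. apply Hg.
    split. apply HaL. apply HLb. lia.
Qed.

Lemma cis_mob u : cis (2 * atan u) = mob u.
Proof.
  unfold cis, mob. rewrite cos_2a_cos, sin_2a, cos_atan, sin_atan.
  assert (Hq : 0 < sqrt (1 + u²)) by (apply sqrt_lt_R0; unfold Rsqr; nra).
  assert (Hqq : sqrt (1 + u²) * sqrt (1 + u²) = 1 + u * u).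
  { rewrite sqrt_sqrt. unfold Rsqr; ring. unfold Rsqr; nra. }
  pose proof (sq_pos u).
  apply injective_projections; simpl.
  - replace (2 * (1 / sqrt (1 + u²)) * (1 / sqrt (1 + u²)) - 1)
      with (2 / (sqrt (1 + u²) * sqrt (1 + u²)) - 1) by (field; lra).
    rewrite Hqq. field. lra.
  - replace (2 * (u / sqrt (1 + u²)) * (1 / sqrt (1 + u²)))
      with (2 * u / (sqrt (1 + u²) * sqrt (1 + u²))) by (field; lra).
    rewrite Hqq. reflexivity.
Qed.

Lemma term2_0 eps a b : term2 eps 0 a b = 0%C.
Proof. unfold term2. change (INR 0) with 0. ring. Qed.

Theorem theorem4 (alpha c : R) :
  0 < alpha < PI -> 0 < c < 2 ->
  exists (x : nat -> C) (beta : nat -> R),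
    (forall n, x n = cis (beta n) /\ 0 < beta n < alpha) /\
    (* denominators eps + x_n x_{n+1} are nonzero along the solution *)
    (forall n, (cis alpha + x n * x (S n))%C <> 0%C) /\
    (* equation at n = 0: second term omitted *)
    term1 (cis alpha) 0 (x 0%nat) (x 1%nat) = rhs (cis alpha) c (x 0%nat) /\
    (* equation at n >= 1 *)
    (forall n, n <> 0%nat ->
       (term1 (cis alpha) n (x n) (x (S n))
        - term2 (cis alpha) n (x (pred n)) (x n))%C = rhs (cis alpha) c (x n)).
Proof.
  intros Hal Hc.
  set (ta := tan (alpha / 2)).
  assert (Hta : 0 < ta).
  { unfold ta, tan. apply Rdiv_lt_0_compat. apply sin_gt_0; lra. apply cos_gt_0; lra. }
  assert (Hal2 : alpha = 2 * atan ta).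
  { unfold ta. rewrite atan_tan. field. split; lra. }
  destruct (exists_good ta c Hta Hc) as [t0 [Ht0 Hgood]].
  set (t := fun n => tt ta c n t0).
  assert (Htin : forall n, 0 < t n < ta).
  { intros n. unfold t. apply (tt_in ta c t0 n Hta Ht0). intros k _. apply Hgood. lia. }
  assert (Heps : cis alpha = mob ta). { rewrite Hal2. apply cis_mob. }
  assert (HRR : forall n, -1 < RR ta c n t0).
  { intros n. destruct (Hgood n). pose proof (Amin_gt ta (t n) Hta (Htin n)). unfold t in *. lra. }
  assert (Hrr : forall n, rr ta (t n) (t (S n)) = RR ta c n t0).
  { intros n. unfold t. rewrite tt_S. apply rr_tnext; auto. apply Htin. }
  assert (Hrel : forall n, INR (S n) * sn (t n) * RR ta c n t0 =
                  c * sn ta / 2 + INR n * sn (sf ta (t n)) * Rp ta c n t0).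
  { intros n. unfold RR, Rnext. fold (t n).
    assert (0 < sn (t n)) by (apply sn_pos; apply Htin).
    assert (0 < INR (S n)) by (apply lt_0_INR; lia).
    field. split; lra. }
  assert (Hmain : forall n, (term1 (mob ta) n (mob (t n)) (mob (t (S n))) -
            term2 (mob ta) n (mob (t (pred n))) (mob (t n)))%C = rhs (mob ta) c (mob (t n))).
  { intros n. apply main_id; auto.
    rewrite Hrr, Hrel. destruct n as [|m].
    - change (INR 0) with 0. ring.
    - simpl pred. rewrite Hrr. unfold Rp. reflexivity. }
  exists (fun n => cis (2 * atan (t n))), (fun n => 2 * atan (t n)).
  split; [|split; [|split]].
  - intros n. split. reflexivity. destruct (Htin n) as [H1 H2].
    pose proof (atan_increasing 0 (t n) H1). pose proof (atan_increasing (t n) ta H2).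
    rewrite atan_0 in *. lra.
  - intros n. rewrite Heps, !cis_mob. apply id_f; auto.
  - rewrite Heps, !cis_mob. specialize (Hmain 0%nat). rewrite term2_0 in Hmain.
    rewrite <- Hmain. ring.
  - intros n _. rewrite Heps, !cis_mob. apply Hmain.
Qed.
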